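(* Let $0<\epsilon<1$ and let $\mathcal C$ be a family of Boolean functions such that every $f:\{0,1\}^n\to\{0,1\}$ in $\mathcal C$ satisfies $\deg_\pm(f)\ge cn^\alpha$, for some constants $c>0$ and $\alpha>0$. Then for every $f\in\mathcal C$, $D(f)\le O(M_\epsilon(f)^{1/\alpha})$.
   Context: $\mathsf N_\epsilon(f)$ is the minimum degree of a real polynomial $p$ with $|p(x)|\le\epsilon$ whenever $f(x)=0$ and $|p(x)|\ge1$ whenever $f(x)=1$; $\overline f=1-f$; $M_\epsilon(f)=\max\{\mathsf N_\epsilon(f),\mathsf N_\epsilon(\overline f)\}$. The sign degree $\deg_\pm(f)$ is the minimum degree of a real polynomial $p$ such that $p(x)<0$ iff $f(x)=1$ for all $x\in\{0,1\}^n$. $D(f)$ is deterministic decision tree complexity. The constant in $O(\cdot)$ depends on $c,\alpha$. *)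

(* Defs.v *)
From HB Require Import structures.
From mathcomp Require Import all_boot all_order all_algebra.
From mathcomp Require Import all_classical all_reals all_analysis.
From mathcomp Require mpoly.
Set Implicit Arguments. Unset Strict Implicit. Unset Printing Implicit Defensive.
Import Order.TTheory GRing.Theory Num.Theory.
Local Open Scope ring_scope.

Definition cube (n : nat) := {ffun 'I_n -> bool}.
Definition boolfun (n : nat) := cube n -> bool.

(* Least natural number satisfying a (Prop) predicate; 0 if none exists. *)
Definition minnat (P : nat -> Prop) : nat :=
  match pselect (exists k, P k) with
  | left h => @ex_minn (fun k => `[< P k >]) (let: ex_intro k hk := h in ex_intro _ k (asboolT hk))
  | right _ => 0%N
  end.

Section Defs.
Variable R : realType.

Definition rpoly (n : nat) := mpoly.mpoly n R.
Definition peval (n : nat) (p : rpoly n) (x : cube n) : R :=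
  mpoly.meval (fun i => (x i : nat)%:R) p.
(* total degree <= d: every monomial in the support of p has total degree <= d
   (this is what  msize p <= d.+1  unfolds to; the zero polynomial has degree <= 0) *)
Definition deg_le (n : nat) (p : rpoly n) (d : nat) : Prop :=
  all (fun m => (mpoly.mdeg m <= d)%N) (mpoly.msupp p).

Definition fcompl (n : nat) (f : boolfun n) : boolfun n := fun x => ~~ f x.

Definition approx_poly (n : nat) (eps : R) (f : boolfun n) (p : rpoly n) : Prop :=
  forall x, (f x = false -> `|peval p x| <= eps) /\ (f x = true -> 1 <= `|peval p x|).
Definition Neps (n : nat) (eps : R) (f : boolfun n) : nat :=
  minnat (fun d => exists p : rpoly n, deg_le p d /\ approx_poly eps f p).
Definition Meps (n : nat) (eps : R) (f : boolfun n) : nat :=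
  maxn (Neps eps f) (Neps eps (fcompl f)).

Definition sign_rep (n : nat) (f : boolfun n) (p : rpoly n) : Prop :=
  forall x, (peval p x < 0) <-> f x = true.
Definition sign_deg (n : nat) (f : boolfun n) : nat :=
  minnat (fun d => exists p : rpoly n, deg_le p d /\ sign_rep f p).
End Defs.

Inductive dtree (n : nat) : Type :=
| Leaf of bool
| Query of 'I_n & dtree n & dtree n.  (* Query i t0 t1: go to t1 if x_i = 1 *)
Arguments Leaf {n}.

Fixpoint dt_eval (n : nat) (t : dtree n) (x : cube n) : bool :=
  match t with
  | Leaf b => b
  | Query i t0 t1 => if x i then dt_eval t1 x else dt_eval t0 x
  end.

Fixpoint dt_depth (n : nat) (t : dtree n) : nat :=
  match t with
  | Leaf _ => 0%N
  | Query _ t0 t1 => (maxn (dt_depth t0) (dt_depth t1)).+1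
  end.

Definition Ddt (n : nat) (f : boolfun n) : nat :=
  minnat (fun d => exists t : dtree n, dt_depth t = d /\ forall x, dt_eval t x = f x).

(* Main.v *)
Require Import Defs.
From HB Require Import structures.
From mathcomp Require Import all_boot all_order all_algebra.
From mathcomp Require Import mpoly.
From mathcomp Require Import boolp reals exp.
From mathcomp Require Import lra.
Import Order.TTheory GRing.Theory Num.Theory.
Local Open Scope ring_scope.
Set Implicit Arguments.
Lemma minnat_P (P : nat -> Prop) : (exists k, P k) -> P (minnat P).
Proof.
move=> h; rewrite /minnat; case: pselect => [h'|//].
case: ex_minnP => m /asboolP Pm _; exact Pm.
Qed.

Lemma minnat_le (P : nat -> Prop) k : P k -> (minnat P <= k)%N.
Proof.
move=> Pk; rewrite /minnat; case: pselect => [h'|//].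
case: ex_minnP => m _ H; apply: H; exact/asboolP.
Qed.

Lemma deg_le_ex (R : realType) n (p : rpoly R n) : exists d, deg_le p d.
Proof.
exists (\max_(m <- msupp p) mdeg m)%N.
rewrite /deg_le; apply/allP => m Hm; exact: leq_bigmax_seq.
Qed.

Lemma indicator (R : realType) n (f : boolfun n) :
  exists p : rpoly R n, forall x, peval p x = (f x)%:R.
Proof.
pose X (i : 'I_n) : rpoly R n := 'X_i.
exists (\sum_(a : cube n | f a) \prod_(i < n) (if a i then X i else 1 - X i)).
move=> x; rewrite /peval rmorph_sum.
have E : forall a : cube n, meval (fun i => (x i : nat)%:R)
   (\prod_(i < n) (if a i then X i else 1 - X i)) = (a == x)%:R :> R.
  move=> a; rewrite rmorph_prod /=.
  have [->|Hne] := eqVneq a x.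
    rewrite big1 // => i _; case Ei: (x i); rewrite /X ?mevalB ?meval1 mevalXU Ei //= subr0 //.
  have [j Hi] : exists i, a i != x i.
    apply/existsP; rewrite -negb_forall; apply: contra Hne => /forallP H.
    by apply/eqP/ffunP => i; apply/eqP.
  rewrite (bigD1 j) //= (_ : meval _ (if a j then X j else 1 - X j) = 0) ?mul0r //.
  move: Hi; case: (a j); case Ei: (x j) => //= _; rewrite /X ?mevalB ?meval1 mevalXU Ei //= subrr //.
rewrite (eq_bigr (fun a => (a == x)%:R)); last by move=> a _; exact: E.
case Hf: (f x).
  rewrite (bigD1 x) //= eqxx big1 ?addr0 // => a /andP[_ /negbTE ->] //.
rewrite big1 // => a fa; suff /negbTE -> : a != x by [].
by apply/eqP => ax; move: fa; rewrite ax Hf.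
Qed.
Definition upd n (x : cube n) (i : 'I_n) (b : bool) : cube n :=
  [ffun j => if j == i then b else x j].

Fixpoint bt n (f : boolfun n) (s : seq 'I_n) (x : cube n) : dtree n :=
  match s with
  | [::] => Leaf (f x)
  | i :: s' => Query i (@bt n f s' (upd x i false)) (@bt n f s' (upd x i true))
  end.

Lemma bt_depth n (f : boolfun n) s x : dt_depth (bt f s x) = size s.
Proof. by elim: s x => [|i s IH] x //=; rewrite !IH maxnn. Qed.

Lemma bt_eval n (f : boolfun n) (s : seq 'I_n) : forall x y : cube n,
  (forall j, j \notin s -> x j = y j) -> dt_eval (bt f s x) y = f y.
Proof.
elim: s => [|i s IH] x y H /=.
  by congr f; apply/ffunP => j; apply: H.
case Hy: (y i); apply: IH => j js; rewrite ffunE;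
  (case: eqP => [->//|/eqP ji]; apply: H; by rewrite inE negb_or ji).
Qed.

Lemma Ddt_le n (f : boolfun n) : (Ddt f <= n)%N.
Proof.
apply: minnat_le; exists (bt f (enum 'I_n) [ffun => false]); split.
  by rewrite bt_depth size_enum_ord.
by move=> x; apply: bt_eval => j; rewrite mem_enum.
Qed.
Lemma deg_leM (R : realType) n (p q : rpoly R n) d e :
  deg_le p d -> deg_le q e -> deg_le (p * q) (d + e).
Proof.
move=> /allP Hp /allP Hq; apply/allP => m /msuppM_le /allpairsP [[m1 m2] /= [h1 h2 ->]].
by rewrite mdegD leq_add // ?Hp ?Hq.
Qed.

Lemma deg_leBC (R : realType) n (p : rpoly R n) (c : R) d :
  deg_le p d -> deg_le (p - c%:MP) d.
Proof.
move=> /allP Hp; apply/allP => m /msuppB_le; rewrite mem_cat => /orP [/Hp //|].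
by rewrite msuppC; case: eqP => // _; rewrite inE => /eqP ->; rewrite mdeg0.
Qed.

Lemma sign_from_approx (R : realType) n (f : boolfun n) (eps : R) (q : rpoly R n) :
  0 < eps -> eps < 1 -> approx_poly eps (fcompl f) q ->
  sign_rep f (q * q - ((1 + eps * eps) / 2)%:MP).
Proof.
move=> e0 e1 H x; rewrite /peval mevalB mevalM mevalC.
set v := meval _ q.
have := H x; rewrite /fcompl; case: (f x) => /= [[h _]|[_ h]].
  have {h} := h erefl; rewrite ler_norml => /andP [h1 h2].
  split => // _; nra.
have {h} := h erefl; rewrite ler_normr => /orP h.
split => // hv; exfalso; case: h => h; nra.
Qed.

Theorem lemma3p2 (R : realType) (c alpha : R) (hc : 0 < c) (halpha : 0 < alpha) :
  exists K : R,
    forall (eps : R), 0 < eps -> eps < 1 ->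
    forall (C : forall n : nat, boolfun n -> Prop),
      (forall (n : nat) (f : boolfun n), C n f ->
         c * (n%:R `^ alpha) <= (sign_deg R f)%:R) ->
      forall (n : nat) (f : boolfun n), C n f ->
        (Ddt f)%:R <= K * ((Meps eps f)%:R `^ (alpha^-1)).
Proof.
exists ((2 / c) `^ alpha^-1) => eps e0 e1 C HC n f Cf.
have Hex : exists d, exists p : rpoly R n, deg_le p d /\ approx_poly eps (fcompl f) p.
  have [p Hp] := indicator R (fcompl f).
  have [d Hd] := deg_le_ex p.
  exists d, p; split => // x; rewrite Hp; case: (fcompl f x) => /=; split => //.
    by rewrite normr1.
  by rewrite normr0 ltW.
have [q [Hqd Hqa]] := minnat_P _ Hex.
have Hs : (sign_deg R f <= Neps eps (fcompl f) + Neps eps (fcompl f))%N.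
  apply: minnat_le; exists (q * q - ((1 + eps * eps) / 2)%:MP); split.
    exact/deg_leBC/deg_leM.
  exact: sign_from_approx.
have HM : (sign_deg R f <= 2 * Meps eps f)%N.
  by apply: (leq_trans Hs); rewrite /Meps mul2n -addnn leq_add ?leq_maxr.
have H1 : c * (n%:R `^ alpha) <= 2 * (Meps eps f)%:R.
  by apply: (le_trans (HC n f Cf)); rewrite -natrM ler_nat.
have H2 : n%:R `^ alpha <= 2 / c * (Meps eps f)%:R.
  by rewrite mulrAC ler_pdivlMr // mulrC.
have an : alpha != 0 by rewrite gt_eqF.
have En : n%:R = (n%:R `^ alpha) `^ alpha^-1 :> R.
  by rewrite -powRrM mulfV // powRr1.
apply: (le_trans (y := n%:R)); first by rewrite ler_nat Ddt_le.
have c2 : 0 <= 2 / c by rewrite divr_ge0 // ltW.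
rewrite En -powRM // ?ler0n //.
apply: (ge0_ler_powR _ _ _ H2).
- by rewrite invr_ge0 ltW.
- by rewrite nnegrE powR_ge0.
- by rewrite nnegrE mulr_ge0 // ler0n.
Qed.
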